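(* Let $R$ be a ring with unity, $N\geq 2$, and let $C$ be an $N$-complex of $R$-modules. Then $C$ is contractible if and only if $C$ is isomorphic to a direct sum (equivalently, product) of $N$-disks $\bigoplus_{n\in\mathbb{Z}} D^N_n(M_n)=\prod_{n\in\mathbb{Z}} D^N_n(M_n)$ for some family of $R$-modules $\{M_n\}_{n\in\mathbb{Z}}$. Moreover, in this case one can take $M_n={}_1Z_{n-(N-1)}(C)$.
   Context: An $N$-complex $X$ is a sequence of $R$-modules and maps $d_n:X_n\to X_{n-1}$ with any composite of $N$ consecutive maps equal to $0$. Chain maps are degreewise maps commuting with differentials. Two chain maps $f,g:X\to Y$ are chain homotopic if there are maps $s_n:X_n\to Y_{n+N-1}$ with $g_n-f_n=\sum_{i=0}^{N-1} d^{N-1-i}s_{n-i}d^i$ for all $n$; $C$ is contractible if $1_C$ is chain homotopic to $0$. For an $R$-module $M$, the disk $D^N_n(M)$ is the $N$-complex equal to $M$ in degrees $n,n-1,\dots,n-(N-1)$, joined by identity maps, and $0$ elsewhere. For an $N$-complex $X$, ${}_1Z_n(X)=\ker(d_n:X_n\to X_{n-1})$. *)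

(* Defs.v *)
From HB Require Import structures.
From mathcomp Require Import all_boot all_order all_algebra.
From mathcomp Require Import boolp.

Set Implicit Arguments.
Unset Strict Implicit.
Unset Printing Implicit Defensive.

Import Order.TTheory GRing.Theory Num.Theory.
Local Open Scope ring_scope.

Section DProd.
Variables (R : pzRingType) (I : Type) (F : I -> lmodType R).

Definition dprod := forall i, F i.

HB.instance Definition _ := gen_eqMixin dprod.
HB.instance Definition _ := gen_choiceMixin dprod.

Definition dprod_zero : dprod := fun i => 0.
Definition dprod_opp (x : dprod) : dprod := fun i => - x i.
Definition dprod_add (x y : dprod) : dprod := fun i => x i + y i.
Definition dprod_scale (a : R) (x : dprod) : dprod := fun i => a *: x i.

Lemma dprod_addA : associative dprod_add.
Proof. by move=> x y z; apply: functional_extensionality_dep => i; rewrite /dprod_add addrA. Qed.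
Lemma dprod_addC : commutative dprod_add.
Proof. by move=> x y; apply: functional_extensionality_dep => i; rewrite /dprod_add addrC. Qed.
Lemma dprod_add0 : left_id dprod_zero dprod_add.
Proof. by move=> x; apply: functional_extensionality_dep => i; rewrite /dprod_add add0r. Qed.
Lemma dprod_addN : left_inverse dprod_zero dprod_opp dprod_add.
Proof. by move=> x; apply: functional_extensionality_dep => i; rewrite /dprod_add /dprod_opp addNr. Qed.

HB.instance Definition _ := GRing.isZmodule.Build dprod
  dprod_addA dprod_addC dprod_add0 dprod_addN.

Lemma dprod_scaleA a b (v : dprod) :
  dprod_scale a (dprod_scale b v) = dprod_scale (a * b) v.
Proof. by apply: functional_extensionality_dep => i; rewrite /dprod_scale scalerA. Qed.
Lemma dprod_scale1 : left_id 1 dprod_scale.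
Proof. by move=> x; apply: functional_extensionality_dep => i; rewrite /dprod_scale scale1r. Qed.
Lemma dprod_scaleDr : right_distributive dprod_scale +%R.
Proof. by move=> a x y; apply: functional_extensionality_dep => i; rewrite /dprod_scale scalerDr. Qed.
Lemma dprod_scaleDl (v : dprod) :
  {morph dprod_scale^~ v : a b / a + b}.
Proof. by move=> a b; apply: functional_extensionality_dep => i; rewrite /dprod_scale scalerDl. Qed.

HB.instance Definition _ := GRing.Zmodule_isLmodule.Build R dprod
  dprod_scaleA dprod_scale1 dprod_scaleDr dprod_scaleDl.

End DProd.

Record precomplex (R : pzRingType) := PreComplex {
  obj :> int -> lmodType R;
  dif : forall n : int, {linear obj n -> obj (n - 1)}
}.

Section Complexes.
Variable R : pzRingType.

(* transport an element living in degree m (packed) to degree n;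
   it is the identity (via the equality m = n) when m = n, and 0 otherwise *)
Definition at_deg (X : int -> lmodType R) (n : int) (p : {m : int & X m}) : X n :=
  match projT1 p =P n with
  | ReflectT e => eq_rect (projT1 p) (fun m => X m) (projT2 p) n e
  | ReflectF _ => 0
  end.

Definition difT (X : precomplex R) (p : {m : int & X m}) : {m : int & X m} :=
  existT (fun m => X m) (projT1 p - 1) (@dif R X (projT1 p) (projT2 p)).

Definition dpow (X : precomplex R) (k : nat) (n : int) (x : X n) : X (n - k%:Z) :=
  at_deg (n - k%:Z) (iter k (@difT X) (existT (fun m => X m) n x)).

Definition is_Ncomplex (N : nat) (X : precomplex R) : Prop :=
  forall (n : int) (x : X n), @dpow X N n x = 0.

Definition is_chain_map (X Y : precomplex R) (f : forall n, X n -> Y n) : Prop :=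
  (forall n, linear (f n)) /\
  (forall n (x : X n), @dif R Y n (f n x) = f (n - 1) (@dif R X n x)).

Definition chain_homotopic (N : nat) (X Y : precomplex R)
    (f g : forall n, X n -> Y n) : Prop :=
  exists s : forall n : int, X n -> Y (n + (N.-1)%:Z),
    (forall n, linear (s n)) /\
    forall (n : int) (x : X n),
      g n x - f n x =
      \sum_(i < N)
        at_deg n (existT (fun m => Y m) _
          (@dpow Y (N.-1 - i) _ (s (n - i%:Z) (@dpow X i n x)))).

Definition contractible (N : nat) (C : precomplex R) : Prop :=
  chain_homotopic N (fun n (_ : C n) => 0) (fun n (x : C n) => x).

Definition cx_iso (X Y : precomplex R) : Prop :=
  exists (f : forall n, X n -> Y n) (g : forall n, Y n -> X n),
    [/\ is_chain_map f, is_chain_map g,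
        (forall n (x : X n), g n (f n x) = x) &
        (forall n (y : Y n), f n (g n y) = y)].

(* D^N_n(M) is M in degrees k with n-(N-1) <= k <= n and 0 elsewhere;
   we model its degree-k component as the module of functions
   (in_disk N n k -> M), which is M when in_disk N n k holds and 0 otherwise. *)
Definition in_disk (N : nat) (n k : int) : bool :=
  (n - (N.-1)%:Z <= k) && (k <= n).

Definition disk_obj (N : nat) (M : lmodType R) (n k : int) : lmodType R :=
  dprod (fun _ : in_disk N n k => M).

Definition disk_dif (N : nat) (M : lmodType R) (n k : int)
    (x : disk_obj N M n k) : disk_obj N M n (k - 1) :=
  fun _ =>
    match boolP (in_disk N n k) with
    | AltTrue e => x e
    | AltFalse _ => 0
    end.

Lemma disk_dif_linear N M n k : linear (@disk_dif N M n k).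
Proof.
move=> a u v; apply: functional_extensionality_dep => h.
rewrite /disk_dif /=; destruct (boolP (in_disk N n k)); first by [].
by rewrite /= /dprod_add /dprod_scale scaler0 addr0.
Qed.

HB.instance Definition _ N M n k :=
  GRing.isLinear.Build R _ _ _ (@disk_dif N M n k) (@disk_dif_linear N M n k).

Definition disk (N : nat) (M : lmodType R) (n : int) : precomplex R :=
  @PreComplex R (disk_obj N M n) (@disk_dif N M n).

(* prod_{n in Z} D^N_n(M_n), which equals the direct sum since in each
   degree only finitely many (N) factors are nonzero *)
Definition disk_sum_obj (N : nat) (M : int -> lmodType R) (k : int) :=
  dprod (fun n : int => disk_obj N (M n) n k).

Definition disk_sum_dif (N : nat) (M : int -> lmodType R) (k : int)
    (x : disk_sum_obj N M k) : disk_sum_obj N M (k - 1) :=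
  fun n => @disk_dif N (M n) n k (x n).

Lemma disk_sum_dif_linear N M k : linear (@disk_sum_dif N M k).
Proof.
move=> a u v; apply: functional_extensionality_dep => n.
exact: (@disk_dif_linear N (M n) n k a (u n) (v n)).
Qed.

HB.instance Definition _ N M k :=
  GRing.isLinear.Build R _ _ _ (@disk_sum_dif N M k) (@disk_sum_dif_linear N M k).

Definition disk_sum (N : nat) (M : int -> lmodType R) : precomplex R :=
  @PreComplex R (disk_sum_obj N M) (@disk_sum_dif N M).

Section Ker.
Variables (C : precomplex R) (n : int).

Definition kerd : {pred C n} := fun x => @dif R C n x == 0.

Lemma kerd_closed : subsemimod_closed kerd.
Proof.
split; first split.
- by rewrite unfold_in /kerd linear0.
- by move=> x y; rewrite !unfold_in /kerd linearD => /eqP -> /eqP ->; rewrite addr0.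
- by move=> a x; rewrite !unfold_in /kerd => /eqP H; rewrite linearZ /= H scaler0.
Qed.

HB.instance Definition _ := GRing.isSubmodClosed.Build R (C n) kerd kerd_closed.

Record Z1 := MkZ1 { z1val : C n; _ : z1val \in kerd }.
HB.instance Definition _ := [isSub for z1val].
HB.instance Definition _ := [Equality of Z1 by <:].
HB.instance Definition _ := [Choice of Z1 by <:].
HB.instance Definition _ := [SubChoice_isSubLmodule of Z1 by <:].
End Ker.

End Complexes.

(* Main.v *)
Require Import Defs.
From HB Require Import structures.
From mathcomp Require Import all_boot all_order all_algebra.
From mathcomp Require Import boolp zify.
Unset Implicit Arguments. Unset Printing Implicit Defensive.
Import Order.TTheory GRing.Theory Num.Theory.
Local Open Scope ring_scope.

Section Gen.
Variable R : pzRingType.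

Section Lin.
Variables (U V : lmodType R) (f : U -> V) (H : linear f).
Lemma linP0 : f 0 = 0.
Proof. have := H (-1) 0 0; rewrite scaler0 addr0 scaleN1r => h.
by rewrite addNr in h. Qed.
Lemma linPD u v : f (u + v) = f u + f v.
Proof. by have := H 1 u v; rewrite !scale1r. Qed.
Lemma linPZ a u : f (a *: u) = a *: f u.
Proof. by have := H a u 0; rewrite !addr0 linP0 addr0. Qed.
Lemma linPN u : f (- u) = - f u.
Proof. by rewrite -scaleN1r linPZ scaleN1r. Qed.
Lemma linPB u v : f (u - v) = f u - f v.
Proof. by rewrite linPD linPN. Qed.
Lemma linP_sum (I : Type) (r : seq I) (P : pred I) (F : I -> U) :
  f (\sum_(i <- r | P i) F i) = \sum_(i <- r | P i) f (F i).
Proof. exact: (big_morph f linPD linP0). Qed.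
End Lin.

Lemma lin_comp (U V W : lmodType R) (f : U -> V) (g : V -> W) :
  linear f -> linear g -> linear (g \o f).
Proof. by move=> hf hg a u v /=; rewrite hf hg. Qed.

Section AtDeg.
Variable X : int -> lmodType R.
Lemma at_degE n (x : X n) : at_deg n (existT _ n x) = x.
Proof. rewrite /at_deg /=; case: eqP => [e|//]. by rewrite (eq_irrelevance e erefl). Qed.
Lemma at_deg0 n m (x : X m) : m != n -> at_deg n (existT _ m x) = 0.
Proof. rewrite /at_deg /= => /eqP H; case: eqP => // e. Qed.
Lemma packE (q : {m : int & X m}) n : projT1 q = n -> q = existT _ n (at_deg n q).
Proof. by case: q => m x /= <-; rewrite at_degE. Qed.
Lemma at_deg_lin n m : linear (fun x : X m => at_deg n (existT _ m x)).
Proof.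
case: (eqVneq m n) => [<-|ne] a u v; first by rewrite !at_degE.
by rewrite !at_deg0 // scaler0 addr0.
Qed.
Lemma at_deg_z n m : at_deg n (existT X m 0) = 0.
Proof. by have /= := linP0 _ _ _ (at_deg_lin n m). Qed.
Lemma at_at n a (q : {m : int & X m}) : projT1 q = a ->
  at_deg n (existT _ a (at_deg a q)) = at_deg n q.
Proof. by move=> e; rewrite {2}(packE _ _ e). Qed.
End AtDeg.

Section Cx.
Variable X : precomplex R.
Local Notation pk := {m : int & X m}.
Local Notation D := (@difT R X).

Lemma dif_linear k : linear (@dif R X k).
Proof. by move=> a u v; rewrite linearP. Qed.

Lemma projT1_iter k (p : pk) : projT1 (iter k D p) = projT1 p - k%:Z.
Proof. elim: k => [|k IH] /=; first by rewrite subr0. rewrite IH; lia. Qed.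

Lemma iter_pack k n (x : X n) :
  iter k D (existT _ n x) = existT _ (n - k%:Z) (@dpow R X k n x).
Proof. by apply: packE; rewrite projT1_iter. Qed.

Lemma dif_at k (q : pk) : @dif R X k (at_deg k q) = at_deg (k - 1) (D q).
Proof.
case: q => m x; case: (eqVneq m k) => [<-|ne]; first by rewrite /= !at_degE.
rewrite /= !at_deg0 ?linear0 //; apply: contra ne => /eqP h; apply/eqP. move: h => /= h; lia.
Qed.

Lemma dpowS k n (x : X n) : @dpow R X k.+1 n x =
  at_deg (n - k.+1%:Z) (existT _ (n - k%:Z - 1) (@dif R X _ (@dpow R X k n x))).
Proof. by rewrite /dpow /= -/(@dpow R X k n x) iter_pack. Qed.

Lemma dpow_lin k n : linear (@dpow R X k n).
Proof.
elim: k => [|k IH].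
  move=> a u v; rewrite /dpow /= -!/(at_deg _ _).
  by have := @at_deg_lin X (n - 0%:Z) n a u v.
have -> : @dpow R X k.+1 n = (fun x => at_deg (n - k.+1%:Z)
    (existT _ (n - k%:Z - 1) (@dif R X _ (@dpow R X k n x)))).
  by apply: funext => x; rewrite dpowS.
move=> a u v /=; rewrite IH linearP; exact: (@at_deg_lin X _ _ a).
Qed.

Lemma iterat_lin m a k : linear (fun x : X k => at_deg m (iter a D (existT _ k x))).
Proof.
have -> : (fun x : X k => at_deg m (iter a D (existT _ k x))) =
  (fun x => at_deg m (existT _ (k - a%:Z) (@dpow R X a k x))).
  by apply: funext => x; rewrite iter_pack.
by move=> b u v /=; rewrite dpow_lin; exact: (@at_deg_lin X _ _ b).
Qed.

Definition zp (q : pk) := projT2 q = 0.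
Lemma zp0 m : zp (existT (fun m => X m) m 0). Proof. by []. Qed.
Lemma zpD q : zp q -> zp (D q).
Proof. by case: q => m x; rewrite /zp /= => ->; rewrite linear0. Qed.
Lemma zp_iter k q : zp q -> zp (iter k D q).
Proof. by move=> h; elim: k => //= k IH; exact: zpD. Qed.
Lemma zp_at n q : zp q -> at_deg n q = 0.
Proof. by case: q => m x; rewrite /zp /= => ->; rewrite at_deg_z. Qed.
End Cx.
Arguments zp_at {X n q}.
Arguments zp_iter {X k q}.
Arguments zpD {X q}.
Arguments projT1_iter {X k p}.
Arguments iter_pack {X k n x}.
Arguments dif_at {X k q}.

Section Hom.
Variables (X Y : precomplex R) (N : nat) (s : forall n, X n -> Y (n + (N.-1)%:Z)).
Definition Sp (q : {m : int & X m}) : {m : int & Y m} :=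
  existT _ (projT1 q + (N.-1)%:Z) (s (projT1 q) (projT2 q)).

Lemma Sp_pack q a : projT1 q = a ->
  Sp q = existT _ (a + (N.-1)%:Z) (s a (at_deg a q)).
Proof. by move=> e; rewrite {1}(packE _ _ _ e). Qed.

Lemma hom_term n (x : X n) i :
 at_deg n (existT (fun m => Y m) _
   (@dpow R Y (N.-1 - i) _ (s (n - i%:Z) (@dpow R X i n x))))
 = at_deg n (iter (N.-1 - i) (@difT R Y) (Sp (iter i (@difT R X) (existT _ n x)))).
Proof.
rewrite (@Sp_pack _ (n - i%:Z)); last by rewrite projT1_iter.
by rewrite /dpow at_at // projT1_iter.
Qed.
End Hom.

Definition getd N (M : lmodType R) n k (x : disk_obj N M n k) : M :=
  match boolP (in_disk N n k) with AltTrue e => x e | AltFalse _ => 0 end.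
Arguments getd {N M n k}.

Lemma getd_in N (M : lmodType R) n k (x : disk_obj N M n k) (e : in_disk N n k) : getd x = x e.
Proof.
rewrite /getd; destruct (boolP (in_disk N n k)) as [e'|h]; last by rewrite e in h.
by rewrite (bool_irrelevance e' e).
Qed.
Arguments getd_in {N M n k}.
Lemma getd_out N (M : lmodType R) n k (x : disk_obj N M n k) : ~~ in_disk N n k -> getd x = 0.
Proof. by rewrite /getd; destruct (boolP (in_disk N n k)) as [e|e] => //; rewrite e. Qed.
Lemma getd_const N (M : lmodType R) n k (c : M) :
  getd (fun _ : in_disk N n k => c) = if in_disk N n k then c else 0.
Proof. by rewrite /getd; destruct (boolP (in_disk N n k)) as [e|e] => //; rewrite e. Qed.
Lemma getd_lin N M n k : linear (@getd N M n k).
Proof.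
move=> a u v; rewrite /getd; destruct (boolP (in_disk N n k)) => //.
by rewrite scaler0 addr0.
Qed.
Lemma disk_eq N (M : lmodType R) n k (x y : disk_obj N M n k) : getd x = getd y -> x = y.
Proof.
move=> h; apply: functional_extensionality_dep => e.
by rewrite -(getd_in x e) -(getd_in y e).
Qed.
Lemma getd_dif N (M : lmodType R) n k (x : disk_obj N M n k) :
  getd (disk_dif x) = if in_disk N n (k - 1) then getd x else 0.
Proof. exact: getd_const. Qed.
Lemma getd0 N M n k : getd (0 : disk_obj N M n k) = 0.
Proof. by have /= := linP0 _ _ _ (getd_lin N M n k). Qed.

Section Main.
Variables (C : precomplex R) (n1 : nat).
Local Notation N := n1.+1.
Variable s : forall n, C n -> C (n + (N.-1)%:Z).
Hypothesis slin : forall n, linear (s n).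
Hypothesis hNc : is_Ncomplex N C.
Local Notation D := (@difT R C).
Local Notation S := (Sp C C N s).
Hypothesis hom : forall n (x : C n),
  x = \sum_(i < N) at_deg n (iter (n1 - i) D (S (iter i D (existT _ n x)))).

Lemma zpS q : zp C q -> zp C (S q).
Proof. by case: q => m x; rewrite /zp /= => ->; rewrite (linP0 _ _ _ (slin m)). Qed.

Lemma nilp a q : (N <= a)%N -> zp C (iter a D q).
Proof.
move=> h; rewrite -(subnK h) iterD; apply: zp_iter.
by case: q => m x; rewrite iter_pack /zp /=; apply: hNc.
Qed.

Lemma KL j (x : C j) : @dif R C j x = 0 -> at_deg j (iter n1 D (S (existT _ j x))) = x.
Proof.
move=> dx; rewrite {2}(hom j x) big_ord_recl /= subn0 big1 ?addr0 //.
move=> i _; apply: zp_at; apply: zp_iter; apply: zpS.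
rewrite add0n -iterS iterSr; apply: zp_iter; exact: dx.
Qed.

Definition Mz (n : int) : lmodType R := Z1 C (n - (N.-1)%:Z).
Definition Pk k (x : disk_sum_obj N Mz k) (n : int) : {m : int & C m} :=
  existT _ (n - (N.-1)%:Z) (val (getd (x n))).
Definition Psi k (w : int -> {m : int & C m}) : C k :=
  \sum_(r < N) at_deg k (iter r D (S (w (k + r%:Z)))).
Definition psi k (x : disk_sum_obj N Mz k) : C k := Psi k (Pk k x).

Lemma val0 j : val (0 : Z1 C j) = 0.
Proof. by []. Qed.

Lemma Pk_dif k (x : disk_sum_obj N Mz k) n : in_disk N n (k - 1) ->
  Pk (k - 1) (disk_sum_dif x) n = Pk k x n.
Proof. by move=> h; rewrite /Pk /= getd_dif h. Qed.

Lemma Pk_out k (x : disk_sum_obj N Mz k) n : ~~ in_disk N n k -> zp C (Pk k x n).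
Proof. by move=> h; rewrite /zp /Pk /= getd_out. Qed.

Lemma psi_chain k (x : disk_sum_obj N Mz k) : @dif R C k (psi k x) = psi (k - 1) (disk_sum_dif x).
Proof.
rewrite /psi /Psi linear_sum.
under eq_bigr do rewrite dif_at.
rewrite big_ord_recr /=.
rewrite (zp_at (q := D (iter n1 D (S (Pk k x (k + n1%:Z)))))) ?addr0; last exact: (nilp N _ (leqnn N)).
rewrite big_ord_recl /= (zp_at (q := iter 0 D _)) ?add0r; last first.
  rewrite addr0 Pk_dif; last by rewrite /in_disk; apply/andP; split; lia.
  apply: zpS; apply: Pk_out; rewrite /in_disk; apply/negP => /andP [_]; lia.
apply: eq_bigr => i _; rewrite add0n /bump leq0n add1n.
rewrite Pk_dif; last by rewrite /in_disk; apply/andP; split; have := ltn_ord i; lia.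
by have -> : k - 1 + (i.+1)%:Z = k + i%:Z by lia.
Qed.

Lemma valL j : linear (val : Z1 C j -> C j).
Proof. by move=> a u v; rewrite linearP. Qed.

Lemma evalL k n : linear (fun x : disk_sum_obj N Mz k => x n).
Proof. by []. Qed.

Lemma psi_lin k : linear (psi k).
Proof.
move=> a u v; rewrite /psi /Psi scaler_sumr -big_split; apply: eq_bigr => r _.
rewrite /Pk /= (evalL k (k + r%:Z) a u v) getd_lin valL /Sp /= slin.
exact: iterat_lin.
Qed.

Lemma pack_at (q : {m : int & C m}) k : projT1 q = k -> existT _ k (at_deg k q) = q.
Proof. by move=> e; rewrite -packE. Qed.

Definition wok k (w : int -> {m : int & C m}) :=
  forall r, (r < N)%N -> projT1 (w (k + r%:Z)) = k + r%:Z - (N.-1)%:Z /\ zp C (D (w (k + r%:Z))).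

Lemma push k w m a : wok k w ->
  at_deg m (iter a D (existT _ k (Psi k w))) =
  \sum_(r < N) at_deg m (iter (a + r) D (S (w (k + r%:Z)))).
Proof.
move=> hw; rewrite /Psi.
have h := linP_sum _ _ _ (iterat_lin C m a k) _ (index_enum 'I_N) xpredT
  (fun r : 'I_N => at_deg k (iter r D (S (w (k + r%:Z))))).
rewrite /= in h; rewrite h; apply: eq_bigr => r _.
rewrite pack_at ?iterD //.
rewrite projT1_iter /= (proj1 (hw r (ltn_ord r))); lia.
Qed.

Lemma Psi_step k w b : wok k w -> Psi k w = 0 -> (b < N)%N ->
  (forall r, (r < b)%N -> zp C (w (k + r%:Z))) -> zp C (w (k + b%:Z)).
Proof.
move=> hw h0 hb hlt.
have E := push k w (k - (n1 - b)%:Z) (n1 - b) hw.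
rewrite h0 zp_at in E; last by apply: zp_iter.
rewrite (bigD1 (Ordinal hb)) //= big1 ?addr0 in E; last first.
  move=> r /eqP hr; apply: zp_at.
  case: (ltnP r b) => h.
    by apply: zp_iter; apply: zpS; apply: hlt.
  apply: nilp; have hrb : r != b :> nat by apply/eqP => e; apply: hr; apply: val_inj.
  have := ltn_ord r; lia.
have [e1 e2] := hw b hb.
rewrite subnK in E; last by rewrite -ltnS.
move: e2; rewrite /zp.
rewrite (packE _ _ _ e1) /= in E *.
move=> e2.
have ee : k - (n1 - b)%:Z = k + b%:Z - n1%:Z by lia.
by rewrite ee KL // in E.
Qed.

Lemma Psi_inj k w : wok k w -> Psi k w = 0 ->
  forall r, (r < N)%N -> zp C (w (k + r%:Z)).
Proof.
move=> hw h0.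
suff H : forall b, (b < N)%N -> forall r, (r <= b)%N -> zp C (w (k + r%:Z)).
  by move=> r0 hr0; exact: (H r0 hr0 r0 (leqnn r0)).
elim=> [|b IH] hb r hr.
  have -> : r = 0%N by lia.
  by apply: (Psi_step k w 0 hw h0 hb) => r' hr'; lia.
case: (ltnP r b.+1) => h; first by apply: IH => //; lia.
have -> : r = b.+1 by lia.
by apply: (Psi_step k w b.+1 hw h0 hb) => r' hr'; apply: IH => //; lia.
Qed.

Lemma wok_Pk k (x : disk_sum_obj N Mz k) : wok k (Pk k x).
Proof.
move=> r _; split => //; rewrite /zp /Pk /=.
by have := valP (getd (x (k + r%:Z))); rewrite unfold_in /kerd => /eqP.
Qed.

Lemma psi_inj k (x : disk_sum_obj N Mz k) : psi k x = 0 -> x = 0.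
Proof.
move=> h0; have H := Psi_inj k (Pk k x) (wok_Pk k x) h0.
apply: functional_extensionality_dep => n.
apply: disk_eq; rewrite (_ : (0 : disk_sum_obj N Mz k) n = 0) // getd0.
case: (boolP (in_disk N n k)) => hin; last by rewrite getd_out.
have [r hr ee] : exists2 r : nat, (r < N)%N & k + r%:Z = n.
  exists (absz (n - k)); move: hin; rewrite /in_disk => /andP [h1 h2]; lia.
move: (H r hr); rewrite /zp /Pk /= ee => h.
by apply: val_inj; rewrite /= h.
Qed.

Definition wall (w : int -> {m : int & C m}) :=
  forall n, projT1 (w n) = n - (N.-1)%:Z /\ zp C (D (w n)).

Lemma Psurj k p : (p <= N)%N -> forall x : C k, zp C (iter p D (existT _ k x)) ->
  exists w, [/\ wall w, (forall r, (r + p <= n1)%N -> zp C (w (k + r%:Z))) & Psi k w = x].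
Proof.
elim: p => [|p IH] hp x hx.
  exists (fun n => existT (fun m => C m) (n - (N.-1)%:Z) 0); split.
  - move=> n; split => //; exact: zpD.
  - by [].
  - rewrite /Psi big1 //.
    by move=> r _; apply: zp_at; apply: zp_iter; apply: zpS.
set z := @dpow R C p k x.
have hz : @dif R C _ z = 0 by move: hx; rewrite iterS iter_pack /zp.
set r0 := (n1 - p)%N.
set term := at_deg k (iter r0 D (S (existT _ (k - p%:Z) z))).
have hx' : zp C (iter p D (existT _ k (x - term))).
  rewrite iter_pack /zp /= (linPB _ _ _ (dpow_lin C p k)).
  rewrite {2}/dpow /term pack_at; last by rewrite projT1_iter /=; lia.
  rewrite -iterD addnC subnK; last by lia.
  by rewrite KL // subrr.
have [w' [hw'1 hw'2 hw'3]] := IH (ltnW hp) _ hx'.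
exists (fun n => if n == k + r0%:Z then existT (fun m => C m) (k - p%:Z) z else w' n).
split.
- move=> n; case: eqP => [->|_]; last exact: hw'1.
  split; first by rewrite /=; lia.
  exact: hz.
- move=> r hr; case: eqP => [e|_]; first by lia.
  by apply: hw'2; lia.
have hr0 : (r0 < N)%N by lia.
rewrite /Psi (bigD1 (Ordinal hr0)) //= eqxx.
move: hw'3; rewrite /Psi (bigD1 (Ordinal hr0)) //= zp_at; last first.
  by apply: zp_iter; apply: zpS; apply: hw'2; lia.
rewrite add0r => hw'3.
rewrite addrC (eq_bigr (fun r : 'I_N => at_deg k (iter r D (S (w' (k + r%:Z)))))).
  by rewrite hw'3 /term subrK.
move=> r hr; case: eqP => // e; exfalso; move/eqP: hr; apply.
apply: val_inj => /=; lia.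
Qed.

Lemma wall_ker w n : wall w -> at_deg (n - (N.-1)%:Z) (w n) \in @kerd R C (n - (N.-1)%:Z).
Proof.
move=> hw; have [e1 e2] := hw n.
move: e2; rewrite (packE _ _ _ e1) /zp /= at_degE => e2.
by rewrite unfold_in /kerd e2.
Qed.

Definition pre k (w : int -> {m : int & C m}) : disk_sum_obj N Mz k :=
  fun n _ => insubd (0 : Z1 C (n - (N.-1)%:Z)) (at_deg (n - (N.-1)%:Z) (w n)).

Lemma psi_pre k w : wall w -> psi k (pre k w) = Psi k w.
Proof.
move=> hw; rewrite /psi /Psi; apply: eq_bigr => r _; congr (at_deg _ (iter _ _ (S _))).
have e : in_disk N (k + r%:Z) k.
  by rewrite /in_disk; apply/andP; split; have := ltn_ord r; lia.
rewrite /Pk (getd_in _ e) /pre insubdK; last exact: wall_ker.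
by rewrite pack_at //; case: (hw (k + r%:Z)).
Qed.

Lemma psi_surj k (x : C k) : exists y, psi k y = x.
Proof.
have [w [hw _ hx]] := Psurj k N (leqnn N) x (nilp N _ (leqnn N)).
by exists (pre k w); rewrite psi_pre.
Qed.

Definition finv k (x : C k) : disk_sum_obj N Mz k := proj1_sig (cid (psi_surj k x)).
Lemma finvK k x : psi k (finv k x) = x.
Proof. exact: (proj2_sig (cid (psi_surj k x))). Qed.

Lemma psi_eq k (y y' : disk_sum_obj N Mz k) : psi k y = psi k y' -> y = y'.
Proof.
move=> h; apply/eqP; rewrite -subr_eq0; apply/eqP; apply: psi_inj.
by rewrite (linPB _ _ _ (psi_lin k)) h subrr.
Qed.

Lemma iso_main : cx_iso C (disk_sum N Mz).
Proof.
exists finv, psi; split.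
- split.
    move=> k a u v; apply: psi_eq.
    by rewrite (psi_lin k) !finvK.
  move=> k x; apply: psi_eq.
  by rewrite finvK -(psi_chain k) finvK.
- split; first exact: psi_lin.
  move=> k y; exact: psi_chain.
- by move=> k x; rewrite finvK.
- by move=> k y; apply: psi_eq; rewrite finvK.
Qed.
End Main.

Section Transfer.
Variables (X Y : precomplex R) (N : nat).
Variables (f : forall n, X n -> Y n) (g : forall n, Y n -> X n).
Hypotheses (hf : is_chain_map f) (hg : is_chain_map g)
  (gf : forall n x, g n (f n x) = x).
Variable sD : forall n, Y n -> Y (n + (N.-1)%:Z).
Hypothesis hY : forall n (y : Y n),
  y = \sum_(i < N) at_deg n (iter (N.-1 - i) (@difT R Y) (Sp Y Y N sD (iter i (@difT R Y) (existT _ n y)))).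

Definition Fp (q : {m : int & X m}) : {m : int & Y m} := existT _ (projT1 q) (f _ (projT2 q)).
Definition Gp (q : {m : int & Y m}) : {m : int & X m} := existT _ (projT1 q) (g _ (projT2 q)).
Definition sX n (x : X n) : X (n + (N.-1)%:Z) := g _ (sD n (f n x)).

Lemma F_iter k q : iter k (@difT R Y) (Fp q) = Fp (iter k (@difT R X) q).
Proof. elim: k => //= k ->; by rewrite /Fp /difT /= (proj2 hf). Qed.
Lemma G_iter k q : iter k (@difT R X) (Gp q) = Gp (iter k (@difT R Y) q).
Proof. elim: k => //= k ->; by rewrite /Gp /difT /= (proj2 hg). Qed.
Lemma G_at n q : at_deg n (Gp q) = g n (at_deg n q).
Proof.
case: q => m y; case: (eqVneq m n) => [<-|ne]; first by rewrite /Gp /= !at_degE.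
by rewrite /Gp /= !at_deg0 // (linP0 _ _ _ ((proj1 hg) n)).
Qed.

Lemma hX n (x : X n) :
  x = \sum_(i < N) at_deg n (iter (N.-1 - i) (@difT R X) (Sp X X N sX (iter i (@difT R X) (existT _ n x)))).
Proof.
rewrite -{1}(gf n x) {1}(hY n (f n x)) (linP_sum _ _ _ ((proj1 hg) n)).
apply: eq_bigr => i _.
rewrite -G_at -G_iter.
have -> : existT (fun m => Y m) n (f n x) = Fp (existT _ n x) by [].
by rewrite F_iter.
Qed.

Lemma sX_lin n : (forall m, linear (sD m)) -> linear (sX n).
Proof.
move=> hs a u v; rewrite /sX (proj1 hf) hs; exact: (proj1 hg).
Qed.
End Transfer.

Lemma dprodE (I : Type) (F : I -> lmodType R) a (u v : dprod F) i :
  (a *: u + v) i = a *: u i + v i.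
Proof. by []. Qed.

Section DiskC.
Variables (n1 : nat) (M : int -> lmodType R).
Local Notation N := n1.+1.
Local Notation Y := (disk_sum N M).
Local Notation DY := (@difT R Y).

Definition sD k (y : disk_sum_obj N M k) : disk_sum_obj N M (k + (N.-1)%:Z) :=
  fun n _ => if n == k + (N.-1)%:Z then getd (y n) else 0.

Lemma sD_lin k : linear (sD k).
Proof.
move=> a u v; apply: functional_extensionality_dep => n.
apply: functional_extensionality_dep => e; rewrite /sD /=.
rewrite !dprodE; case: eqP => _; last by rewrite scaler0 addr0.
exact: (getd_lin N (M n) n k a (u n) (v n)).
Qed.

Definition vl (q : {m : int & disk_sum_obj N M m}) n : M n := getd ((projT2 q) n).

Lemma evalL0 k n : (0 : disk_sum_obj N M k) n = 0. Proof. by []. Qed.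

Lemma V_at k (q : {m : int & disk_sum_obj N M m}) n : getd ((at_deg k q : disk_sum_obj N M k) n) = if projT1 q == k then vl q n else 0.
Proof.
case: q => m y; case: (eqVneq m k) => [<-|ne]; first by rewrite at_degE.
by rewrite at_deg0 // evalL0 getd0.
Qed.

Lemma V_D (q : {m : int & disk_sum_obj N M m}) n : vl (DY q) n = if in_disk N n (projT1 q - 1) then vl q n else 0.
Proof. by case: q => m y; rewrite /vl /=; exact: getd_dif. Qed.

Lemma vl_out (q : {m : int & disk_sum_obj N M m}) n : ~~ in_disk N n (projT1 q) -> vl q n = 0.
Proof. by case: q => m y /= h; rewrite /vl /= getd_out. Qed.

Lemma V_S (q : {m : int & disk_sum_obj N M m}) n : vl (Sp Y Y N sD q) n =
  if n == projT1 q + (N.-1)%:Z then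
    (if in_disk N n (projT1 q + (N.-1)%:Z) then vl q n else 0) else 0.
Proof.
case: q => m y; rewrite /vl /Sp /= /sD getd_const.
by case: eqP => _; case: ifP.
Qed.

Lemma V_iter i (q : {m : int & disk_sum_obj N M m}) n : vl (iter i DY q) n = if in_disk N n (projT1 q - i%:Z) then vl q n else 0.
Proof.
elim: i => [|i IH]; rewrite /=.
  case: ifP => // h; rewrite vl_out //; rewrite subr0 in h; by rewrite h.
rewrite V_D IH (@projT1_iter Y i q).
case: (boolP (in_disk N n (projT1 q - i%:Z - 1))) => h1;
case: (boolP (in_disk N n (projT1 q - i%:Z))) => h2;
case: (boolP (in_disk N n (projT1 q - i.+1%:Z))) => h3 //.
- move: h1 h3; rewrite /in_disk => /andP [h1 h1'] /negP; case; apply/andP; split; lia.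
- have h4 : ~~ in_disk N n (projT1 q).
    move: h1 h2; rewrite /in_disk => /andP [h1 h1'] /negP h2; apply/negP => /andP [h4 h4'].
    apply: h2; apply/andP; split; lia.
  by rewrite vl_out.
- move: h1 h3; rewrite /in_disk => /negP h1 /andP [h3 h3']; case: h1; apply/andP; split; lia.
- move: h1 h3; rewrite /in_disk => /negP h1 /andP [h3 h3']; case: h1; apply/andP; split; lia.
Qed.

Lemma term_disk k (y : disk_sum_obj N M k) n (i : nat) : (i < N)%N ->
  getd ((at_deg k (iter (N.-1 - i) DY (Sp Y Y N sD (iter i DY (existT _ k y)))) : disk_sum_obj N M k) n)
  = if (n == k - i%:Z + n1%:Z) && in_disk N n k then getd (y n) else 0.
Proof.
move=> hi.
rewrite V_at V_iter V_S V_iter /= !(@projT1_iter Y) /= ?(@projT1_iter Y) /=.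
have -> : k - i%:Z + n1%:Z - (n1 - i)%:Z = k by lia.
rewrite eqxx.
case: eqP => [->|_] /=; last by case: ifP.
have h1 : in_disk N (k - i%:Z + n1%:Z) k by rewrite /in_disk; apply/andP; split; lia.
have h2 : in_disk N (k - i%:Z + n1%:Z) (k - i%:Z + n1%:Z) by rewrite /in_disk; apply/andP; split; lia.
have h3 : in_disk N (k - i%:Z + n1%:Z) (k - i%:Z) by rewrite /in_disk; apply/andP; split; lia.
by rewrite h1 h2 h3.
Qed.

Lemma evalsum k (F : 'I_N -> disk_sum_obj N M k) n :
  (\sum_(i < N) F i) n = \sum_(i < N) F i n.
Proof.
have h : linear (fun x : disk_sum_obj N M k => x n) by [].
exact: (linP_sum _ _ _ h).
Qed.

Lemma disk_hom k (y : disk_sum_obj N M k) :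
  y = \sum_(i < N) at_deg k (iter (N.-1 - i) DY (Sp Y Y N sD (iter i DY (existT _ k y)))).
Proof.
apply: functional_extensionality_dep => n; apply: disk_eq.
rewrite evalsum (linP_sum _ _ _ (getd_lin N (M n) n k)).
under eq_bigr => i _ do rewrite term_disk //.
case: (boolP (in_disk N n k)) => hin; last first.
  by rewrite getd_out // big1 // => i _; rewrite andbF.
have hi0 : (absz (k + n1%:Z - n)%R < N)%N.
  by move: hin; rewrite /in_disk => /andP [h1 h2]; lia.
rewrite (bigD1 (Ordinal hi0)) //= big1 ?addr0.
  rewrite andbT; case: eqP => // ne; exfalso; apply: ne.
  by move: hin; rewrite /in_disk => /andP [h1 h2]; lia.
move=> i hi; rewrite andbT; case: eqP => // e; exfalso; move/eqP: hi; apply.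
by apply: val_inj => /=; move: hin; rewrite /in_disk => /andP [h1 h2]; lia.
Qed.
End DiskC.
End Gen.

Theorem theorem3p3 (R : pzRingType) (N : nat) (C : precomplex R) :
  (2 <= N)%N -> is_Ncomplex N C ->
  (contractible N C <->
     exists M : int -> lmodType R, cx_iso C (disk_sum N M)) /\
  (contractible N C ->
     cx_iso C (disk_sum N (fun n : int => Z1 C (n - (N.-1)%:Z)))).
Proof.
case: N => [|n1] // hN hNc.
have part2 : contractible n1.+1 C ->
    cx_iso C (disk_sum n1.+1 (fun n : int => Z1 C (n - (n1.+1.-1)%:Z))).
  case=> s [slin hs]; apply: (iso_main R C n1 s slin hNc).
  move=> n x; rewrite -[x in LHS]subr0 hs; apply: eq_bigr => i _.
  exact: hom_term.
split; last exact: part2.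
split; first by move=> hc; eexists; exact: part2 hc.
case=> M [f [g [hf hg gf fg]]].
have hY := disk_hom R n1 M.
exists (sX R C (disk_sum n1.+1 M) n1.+1 f g (sD R n1 M)); split.
  by move=> n; apply: sX_lin => //; exact: sD_lin.
move=> n x; rewrite subr0 {1}(hX R C (disk_sum n1.+1 M) n1.+1 f g hf hg gf (sD R n1 M) hY n x).
by apply: eq_bigr => i _; rewrite hom_term.
Qed.
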